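(* Let $n\ge1$, $q\ge2$ be integers, $b\in\{1,\dots,q-1\}$, $c=\lceil q/b\rceil$ and $d=cb-q$. Let $a\in\{0,\dots,q-1\}$ be unknown and let $\mathbf k\in\mathbb Z_q^n$ be an unknown key having at least one entry that is a unit modulo $q$. Given one query to the quantum oracle $U_{\mathsf{LRF}}:|\mathbf x\rangle|z\rangle\mapsto|\mathbf x\rangle|z+\mathsf{LRF}_{\mathbf k,a,b}(\mathbf x)\bmod c\rangle$ ($\mathbf x\in\mathbb Z_q^n$, $z\in\mathbb Z_c$), the following algorithm outputs $\mathbf k$ with probability at least $4/\pi^2-O(d/q)$: (1) prepare $\frac{1}{\sqrt{q^n}}\sum_{\mathbf x\in\mathbb Z_q^n}|\mathbf x\rangle\otimes\frac{1}{\sqrt c}\sum_{z=0}^{c-1}\omega_c^z|z\rangle$ with $\omega_c=e^{2\pi i/c}$; (2) apply $U_{\mathsf{LRF}}$ once; (3) discard the last register and apply $\mathsf{QFT}_{\mathbb Z_q}^{\otimes n}$; (4) measure in the computational basis and output the outcome.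
   Context: For $a\in\mathbb Z_q$, $b\in\mathbb Z_q\setminus\{0\}$, $c=\lceil q/b\rceil$, partition $\mathbb Z_q$ into blocks $I_v(a,b)=\{a+vb,\dots,a+vb+b-1\}$ (mod $q$) for $v\in\{0,\dots,c-2\}$ and $I_{c-1}(a,b)=\{a+(c-1)b,\dots,a+q-1\}$ (mod $q$). The linear rounding function with key $\mathbf k\in\mathbb Z_q^n$ is $\mathsf{LRF}_{\mathbf k,a,b}:\mathbb Z_q^n\to\mathbb Z_c$, $\mathsf{LRF}_{\mathbf k,a,b}(\mathbf x)=v$ iff $\langle\mathbf x,\mathbf k\rangle\in I_v(a,b)$, where $\langle\cdot,\cdot\rangle$ is the inner product modulo $q$. The quantum Fourier transform over $\mathbb Z_q$ is $\mathsf{QFT}_{\mathbb Z_q}|x\rangle=\frac{1}{\sqrt q}\sum_{y\in\mathbb Z_q}e^{2\pi i xy/q}|y\rangle$. *)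

(* Defs.v *)
From mathcomp Require Import all_boot all_order all_algebra complex.
From mathcomp Require Import all_classical all_reals all_analysis.
Set Implicit Arguments. Unset Strict Implicit. Unset Printing Implicit Defensive.
Import Order.TTheory GRing.Theory Num.Theory.
Local Open Scope ring_scope.
Local Open Scope complex_scope.

Definition vecZq (n q : nat) := {ffun 'I_n -> 'I_q}.

Definition ipq (n q : nat) (x k : vecZq n q) : nat :=
  ((\sum_(i < n) x i * k i) %% q)%N.

Definition ceil_div (q b : nat) : nat := ((q + b - 1) %/ b)%N.

Definition block_len (q b v : nat) : nat :=
  if (v < (ceil_div q b).-1)%N then b else (q - (ceil_div q b).-1 * b)%N.

Definition in_block (q a b v t : nat) : bool :=
  [exists j : 'I_q, (j < block_len q b v)%N && (t == (a + v * b + j) %% q)%N].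

Definition LRF (n q : nat) (k : vecZq n q) (a b : nat) (x : vecZq n q) : nat :=
  match [pick v : 'I_(ceil_div q b) | in_block q a b v (ipq x k)] with
  | Some v => val v
  | None => 0%N
  end.

Definition expi {R : realType} (theta : R) : R[i] := cos theta +i* sin theta.

Definition omega {R : realType} (m t : nat) : R[i] :=
  expi (2 * pi * t%:R / m%:R).


Definition cconj {R : realType} (z : R[i]) : R[i] := complex.Re z -i* complex.Im z.

(* Joint state of the two registers |x>|z>, x in Z_q^n, z in Z_c *)
Definition state (R : realType) (n q c : nat) := vecZq n q -> 'I_c -> R[i].

Definition psi0 {R : realType} (n q c : nat) : state R n q c :=
  fun x z => ((Num.sqrt ((q ^ n)%N%:R : R))^-1 * (Num.sqrt (c%:R : R))^-1)%:C
             * omega c z.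

(* The oracle U : |x>|z> |-> |x>|z + f(x) mod c>, extended linearly *)
Definition apply_oracle {R : realType} (n q c : nat) (f : vecZq n q -> nat)
  (psi : state R n q c) : state R n q c :=
  fun x w => \sum_(z : 'I_c | ((z + f x) %% c)%N == val w) psi x z.

(* Discarding the last register: reduced density matrix on the first *)
Definition reduced_dm {R : realType} (n q c : nat) (psi : state R n q c) :
  vecZq n q -> vecZq n q -> R[i] :=
  fun x x' => \sum_(z : 'I_c) psi x z * cconj (psi x' z).

(* matrix entry <y| QFT_{Z_q}^{(x) n} |x> = prod_i (1/sqrt q) e^{2 pi i x_i y_i/q} *)
Definition QFTn {R : realType} (n q : nat) (y x : vecZq n q) : R[i] :=
  \prod_(i < n) (((Num.sqrt (q%:R : R))^-1)%:C * omega q (x i * y i)%N).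

(* Probability of outcome y when measuring QFT rho QFT^dagger in the
   computational basis: <y| Q rho Q^dagger |y> *)
Definition outcome_prob {R : realType} (n q : nat)
  (rho : vecZq n q -> vecZq n q -> R[i]) (y : vecZq n q) : R :=
  complex.Re (\sum_(x : vecZq n q) \sum_(x' : vecZq n q)
        QFTn y x * rho x x' * cconj (QFTn y x')).

Definition success_prob (R : realType) (n q : nat) (k : vecZq n q) (a b : nat) : R :=
  let c := ceil_div q b in
  outcome_prob
    (reduced_dm (apply_oracle (LRF k a b) (@psi0 R n q c))) k.

(* Main.v *)
Require Import Defs.
From mathcomp Require Import all_boot all_order all_algebra complex.
From mathcomp Require Import all_classical all_reals all_analysis.
From mathcomp Require Import lra zify ring.
Import Order.TTheory GRing.Theory Num.Theory.
Import numFieldNormedType.Exports.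
Local Open Scope ring_scope.

Module PartA.
Local Open Scope complex_scope.
Section A.
Variable R : realType.

Lemma deriv_mono (f df : R -> R) :
  (forall t : R, is_derive t (1:R) f (df t)) -> (forall t : R, 0 <= t -> 0 <= df t) ->
  forall x, 0 <= x -> f 0 <= f x.
Proof.
move=> Hd Hp x x0.
have cf : continuous f.
  by move=> t; apply/differentiable_continuous/derivable1_diffP; exact: ex_derive.
have [c cI E] := MVT_segment x0 (fun t _ => Hd t) (continuous_subspaceT cf).
rewrite -subr_ge0 E subr0 mulr_ge0 //; apply: Hp.
by move: cI; rewrite in_itv /= => /andP[].
Qed.

Lemma sin_le_id (x : R) : 0 <= x -> sin x <= x.
Proof.
move=> x0.
pose f := fun t : R => t - sin t.
have Hd (t : R) : is_derive t (1:R) f (1 - cos t).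
  by apply: is_deriveB.
have := @deriv_mono f _ Hd _ x x0.
rewrite /f sin0 subr0 subr_ge0; apply => t _.
by rewrite subr_ge0 cos_le1.
Qed.

Lemma abs_sin_le (y : R) : `|sin y| <= `|y|.
Proof.
wlog y0 : y / 0 <= y.
  move=> H; case: (leP 0 y) => hy; first exact: H.
  by rewrite -normrN -sinN -(normrN y); apply: H; rewrite oppr_ge0 ltW.
rewrite (ger0_norm y0) ler_norml sin_le_id // andbT.
case: (leP y 1) => hy.
  have s0 : 0 <= sin y.
    by apply: sin_ge0_pi; apply/andP; split => //; have := pi_ge2 R; lra.
  lra.
by apply: le_trans (sin_geN1 _); rewrite lerN2 ltW.
Qed.

Lemma sq_le (a b : R) : 0 <= a -> a <= b -> a ^+ 2 <= b ^+ 2.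
Proof. move=> h1 h2; nra. Qed.

Lemma sin_sqr_le (y : R) : sin y ^+ 2 <= y ^+ 2.
Proof.
rewrite -(real_normK (num_real (sin y))) -(real_normK (num_real y)).
by apply: sq_le; rewrite ?normr_ge0 ?abs_sin_le.
Qed.

Lemma cos_half (y : R) : cos y = 1 - 2 * sin (y / 2) ^+ 2.
Proof.
rewrite -{1}(_ : (y / 2) *+ 2 = y); last by rewrite -mulr_natr divfK // pnatr_eq0.
rewrite cos_mulr2n cos2sin2 -mulr_natr; ring.
Qed.

Lemma cos_ge (y : R) : 1 - y ^+ 2 / 2 <= cos y.
Proof.
rewrite cos_half.
have := sin_sqr_le (y / 2).
have -> : (y / 2) ^+ 2 = y ^+ 2 / 4 by rewrite expr_div_n; congr (_ / _); rewrite -natrX.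
move=> h; lra.
Qed.

Lemma cube_der (t : R) : is_derive t (1:R) (fun s : R => s ^+ 3 / 6) (t ^+ 2 / 2).
Proof.
have h := @is_deriveX R R id 3 t 1 1 (is_derive_id _ _).
have h2 := @is_deriveZ R R R _ (6^-1) t 1 _ h.
have -> : (fun s : R => s ^+ 3 / 6) = (6^-1 \*: id ^+ 3).
  apply/funext => s /=. rewrite /GRing.scale /= /GRing.exp /= mulrC. reflexivity.
apply: is_derive_eq h2 _.
rewrite /GRing.scale /= mulr1.
have -> : (3 : R) = 6 / 2 by field.
by field.
Qed.

Lemma sin_ge (x : R) : 0 <= x -> x - x ^+ 3 / 6 <= sin x.
Proof.
move=> x0.
pose f := fun t : R => sin t - t + t ^+ 3 / 6.
have Hd (t : R) : is_derive t (1:R) f (cos t - 1 + t ^+ 2 / 2).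
  by apply: is_deriveD; apply: cube_der.
have := @deriv_mono f _ Hd _ x x0.
rewrite /f sin0 expr0n /= mul0r subr0 addr0.
have H : forall t : R, 0 <= t -> 0 <= cos t - 1 + t ^+ 2 / 2.
  by move=> t _; have := cos_ge t; lra.
move=> /(_ H) h; lra.
Qed.

Lemma pi2_ge8 : 8 <= (pi : R) ^+ 2.
Proof.
have := cos_ge (pi / 2); rewrite cos_pihalf.
have -> : (pi / 2 : R) ^+ 2 = pi ^+ 2 / 4 by rewrite expr_div_n; congr (_ / _); rewrite -natrX.
move=> h; lra.
Qed.

Lemma pi_lt72 : (pi : R) < 7 / 2.
Proof.
have hc : cos (7 / 4 : R) < 0.
  rewrite cos_half.
  have -> : (7 / 4 / 2 : R) = 7 / 8 by field.
  have h1 := @sin_ge (7 / 8) ltac:(lra).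
  have h2 : 0 <= (7 / 8 : R) - (7 / 8) ^+ 3 / 6.
    rewrite !expr_div_n -!natrX /=; lra.
  have h3 : ((7 / 8 : R) - (7 / 8) ^+ 3 / 6) ^+ 2 <= sin (7 / 8) ^+ 2.
    exact: sq_le.
  move: h3; rewrite !expr_div_n -!natrX /=; lra.
rewrite ltNge; apply/negP => hp.
have h : 0 <= cos (7 / 4 : R).
  by apply: cos_ge0_pihalf; apply/andP; split; have := pi_ge2 R; lra.
lra.
Qed.

End A.

End PartA.
Import PartA.

Module PartB.
Local Open Scope complex_scope.
Section B.
Variable R : realType.
Local Notation nc := (@Normc.normc R).
Local Notation C := R[i].

Lemma nc_ge0 (z : C) : 0 <= nc z.
Proof. by case: z => a b; rewrite /= sqrtr_ge0. Qed.

Lemma ncD (x y : C) : nc (x + y) <= nc x + nc y.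
Proof. exact: (@le_normcD R x y). Qed.

Lemma ncM (x y : C) : nc (x * y) = nc x * nc y.
Proof. exact: Normc.normcM. Qed.

Lemma ncN (x : C) : nc (- x) = nc x.
Proof. by case: x => a b; rewrite /= !sqrrN. Qed.

Lemma ncB (x y : C) : nc (x - y) = nc (y - x).
Proof. by rewrite -ncN opprB. Qed.

Lemma ncC (k : R) : nc (k%:C) = `|k|.
Proof. by rewrite /= expr0n /= addr0 sqrtr_sqr. Qed.

Lemma nc_sum (I : Type) (r : seq I) (P : pred I) (F : I -> C) :
  nc (\sum_(i <- r | P i) F i) <= \sum_(i <- r | P i) nc (F i).
Proof.
elim/big_rec2: _ => [|i y1 y2 _ h]; first by rewrite /= expr0n /= addr0 sqrtr0.
by apply: le_trans (ncD _ _) _; rewrite lerD2l.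
Qed.

Lemma nc_lb (x y : C) : nc x - nc (x - y) <= nc y.
Proof.
have := ncD (x - y) y.
by rewrite subrK => h; lra.
Qed.

Lemma mul_conj (z : C) : z * conjc z = ((nc z) ^+ 2)%:C.
Proof.
case: z => a b; rewrite /= sqr_sqrtr ?addr_ge0 ?sqr_ge0 //.
apply/eqP; rewrite eq_complex /=; apply/andP; split; apply/eqP; ring.
Qed.

Lemma cconjE (z : C) : cconj z = conjc z.
Proof. by case: z. Qed.

Lemma expiD (a b : R) : expi a * expi b = expi (a + b).
Proof.
rewrite /expi /= cosD sinD; apply/eqP; rewrite eq_complex /=; apply/andP; split; apply/eqP; ring.
Qed.

Lemma expi0 : expi (0 : R) = 1.
Proof. by rewrite /expi cos0 sin0. Qed.

Lemma expiN (a : R) : conjc (expi a) = expi (- a).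
Proof. by rewrite /expi cosN sinN. Qed.

Lemma nc_expi (a : R) : nc (expi a) = 1.
Proof. by rewrite /= cos2Dsin2 sqrtr1. Qed.

Lemma expi_conj1 (a : R) : expi a * conjc (expi a) = 1.
Proof. by rewrite mul_conj nc_expi expr1n. Qed.

Lemma expi_sum (I : Type) (r : seq I) (P : pred I) (F : I -> R) :
  \prod_(i <- r | P i) expi (F i) = expi (\sum_(i <- r | P i) F i).
Proof.
apply/esym; apply: (big_morph (@expi R)); last exact: expi0.
by move=> x y; rewrite expiD.
Qed.

Lemma expi_period (a : R) (k : nat) : expi (a + 2 * pi * k%:R) = expi a.
Proof.
have -> : 2 * pi * k%:R = (pi *+ 2) *+ k :> R by rewrite -[(pi *+ 2) *+ k]mulr_natr -[pi *+ 2]mulr_natr; ring.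
by rewrite /expi (periodicn (@cosD2pi R)) (periodicn (@sinD2pi R)).
Qed.

Lemma omega_mod (m t : nat) : (0 < m)%N -> @omega R m (t %% m) = omega m t.
Proof.
move=> m0; rewrite /omega {2}(divn_eq t m) natrD natrM.
have mR : (m%:R : R) != 0 by rewrite pnatr_eq0 -lt0n.
have -> : 2 * pi * ((t %/ m)%:R * m%:R + (t %% m)%:R) / m%:R =
   2 * pi * (t %% m)%:R / m%:R + 2 * pi * (t %/ m)%:R :> R by field.
by rewrite expi_period.
Qed.

Lemma omegaD (m s t : nat) : @omega R m (s + t) = omega m s * omega m t.
Proof. by rewrite /omega expiD natrD; congr expi; rewrite !mulrDr mulrDl. Qed.

Lemma chord_sq (u : R) : nc (expi u - 1) ^+ 2 = 4 * sin (u / 2) ^+ 2.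
Proof.
rewrite /= sqr_sqrtr; last by rewrite addr_ge0 ?sqr_ge0.
rewrite oppr0 addr0 [cos u]cos_half.
have := cos2Dsin2 u; rewrite [cos u]cos_half => h.
nra.
Qed.

Lemma chord_up (t p : R) : nc (expi t - expi p) <= `|t - p|.
Proof.
have -> : expi t - expi p = expi p * (expi (t - p) - 1).
  by rewrite mulrBr mulr1 expiD [p + _]addrC subrK.
rewrite ncM nc_expi mul1r.
rewrite -(ger0_norm (nc_ge0 _)) -[X in _ <= X]normr_id.
rewrite -ler_sqr ?nnegrE ?normr_ge0 // !real_normK ?num_real // chord_sq.
have := @sin_sqr_le R ((t - p) / 2).
rewrite expr_div_n -natrX /=; lra.
Qed.

Lemma sin_pic (c : nat) : (2 <= c)%N -> 2 / c%:R <= sin (pi / c%:R : R).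
Proof.
move=> c2.
have [->|c3] := eqVneq c 2%N.
  by rewrite sin_pihalf divff // pnatr_eq0.
have c3' : (3 <= c)%N by rewrite ltn_neqAle eq_sym c3 c2.
have cR : (3 : R) <= c%:R by rewrite (ler_nat R 3 c).
set y := pi / c%:R.
have hpi := pi2_ge8 R. have hpi2 := pi_lt72 R. have hpi3 := pi_ge2 R.
have cy : c%:R * y = pi by rewrite /y mulrC divfK // gt_eqF // (lt_le_trans _ cR).
have y0 : 0 <= y by rewrite /y divr_ge0 // ?pi_ge0 // (le_trans _ cR).
apply: le_trans (@sin_ge R y y0).
have yle : y <= pi / 3.
  rewrite /y; apply: ler_wpM2l; first exact: pi_ge0.
  have c0 : (0 : R) < c%:R by lra.
  by rewrite lef_pV2 ?posrE //; lra.
have c0 : (0 : R) < c%:R by lra.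
rewrite -(@ler_pM2l _ c%:R) // mulrCA divff ?gt_eqF // mulr1.
have -> : c%:R * (y - y ^+ 3 / 6) = pi - pi * y ^+ 2 / 6.
  by rewrite -cy; ring.
have hy2 : y ^+ 2 <= pi ^+ 2 / 9.
  have e : (pi / 3 : R) ^+ 2 = pi ^+ 2 / 9.
    by rewrite expr_div_n; congr (_ / _); rewrite -natrX.
  by rewrite -e; apply: sq_le.
have hpi4 : 14 / 5 <= (pi : R) by nra.
nra.
Qed.

Lemma chord_low (c : nat) : (2 <= c)%N -> 4 / c%:R <= nc (expi (2 * pi / c%:R) - 1).
Proof.
move=> c2.
have cR : (0 : R) < c%:R by rewrite ltr0n (leq_trans _ c2).
rewrite -(ger0_norm (nc_ge0 _)) -[X in X <= _]ger0_norm; last by rewrite divr_ge0 // ltW.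
rewrite -ler_sqr ?nnegrE ?normr_ge0 // !real_normK ?num_real // chord_sq.
have -> : 2 * pi / c%:R / 2 = pi / c%:R :> R by field; rewrite gt_eqF.
have h := @sin_pic c c2.
have h0 : 0 <= 2 / c%:R :> R by rewrite divr_ge0 // ltW.
have := @sq_le R _ _ h0 h.
rewrite !expr_div_n -!natrX /= => h2.
have -> : (4 ^ 2)%:R = 4 * (2 ^ 2)%:R :> R by rewrite -natrM.
rewrite -mulrA ler_pM2l //.
Qed.

End B.

End PartB.
Import PartB.

Module PartC.
Local Open Scope complex_scope.

Section C1.
Variable V : zmodType.

Lemma rot_sum (q m : nat) (F : nat -> V) : (0 < q)%N ->
  \sum_(0 <= s < q) F ((m + s) %% q)%N = \sum_(0 <= t < q) F t.
Proof.
move=> q0; elim: m => [|m IH].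
  by apply: eq_big_nat => s /andP[_ hs]; rewrite add0n modn_small.
rewrite -IH; set G := fun s => F ((m + s) %% q)%N.
under eq_bigr do rewrite addSnnS.
have h1 := big_nat_recl q 0 G (leq0n q).
have h2 : \sum_(0 <= i < q.+1) G i = \sum_(0 <= i < q) G i + G q by rewrite big_nat_recr.
have hq : G q = G 0%N by rewrite /G addn0 modnDr.
move: h2; rewrite h1 hq [in RHS]addrC => /(addrI (G 0%N)).
by move=> ->.
Qed.

Lemma block_sum (c b : nat) (H : nat -> V) :
  \sum_(0 <= s < c * b) H (s %% b)%N = (\sum_(0 <= j < b) H j) *+ c.
Proof.
elim: c => [|c IH]; first by rewrite mul0n big_geq.
rewrite mulSnr (@big_cat_nat _ _ _ (c * b)) //= ?leq_addr // IH.
rewrite -{1}(add0n (c * b)%N) big_addn addKn mulrSr.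
congr (_ + _); apply: eq_big_nat => j /andP[_ hj].
by rewrite addnC modnMDl modn_small.
Qed.

End C1.

Lemma ceil_facts (q b : nat) : (0 < b)%N ->
  let c := ceil_div q b in ((c.-1 * b < q) || (q == 0))%N /\ (q <= c * b)%N.
Proof.
move=> b0 c.
have h1 : (c * b <= q + b - 1)%N by rewrite /c /ceil_div leq_trunc_div.
have h2 : (q + b - 1 < c.+1 * b)%N by rewrite /c /ceil_div ltn_ceil.
rewrite mulSn in h2.
split.
  case: c h1 h2 => [|c'] /= h1 h2; first by lia.
  rewrite mulSn in h1; apply/orP; left; lia.
lia.
Qed.

Definition Gf (q a b t : nat) : nat :=
  match [pick v : 'I_(ceil_div q b) | in_block q a b v t] with
  | Some v => val v
  | None => 0%N
  end.

Lemma LRF_Gf n q (k : vecZq n q) a b x : LRF k a b x = Gf q a b (ipq x k).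
Proof. by []. Qed.

Lemma in_block_iff (q a b s v : nat) : (0 < b)%N -> (b < q)%N -> (s < q)%N ->
  (v < ceil_div q b)%N -> in_block q a b v ((a + s) %% q)%N = (v == s %/ b)%N.
Proof.
move=> b0 bq sq.
have [hc1 hc2] := @ceil_facts q b b0.
rewrite /in_block /block_len.
move: (ceil_div q b) hc1 hc2 => c hc1 hc2 vc.
have hc1' : (c.-1 * b < q)%N by case/orP: hc1 => // /eqP q0; lia.
have hcc : (c.-1 * b + b = c * b)%N by case: (c) vc => // c' _; rewrite /= mulSn addnC.
apply/idP/idP.
  move=> /existsP [j /andP [hj /eqP he]].
  move: he; rewrite -addnA => /eqP; rewrite eqn_modDl => /eqP he.
  have [hjb hlt] : (j < b)%N /\ (v * b + j < q)%N.
    move: hj; case: ifP => hv hj.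
      have := leq_mul hv (leqnn b); rewrite mulSn => hm; split => //.
      move: (nat_of_ord j) (c.-1 * b)%N (v * b)%N hj hm hc1' => jj X Y; lia.
    have hv' : v = c.-1 by lia.
    rewrite hv'; split; move: (nat_of_ord j) (c.-1 * b)%N (c * b)%N hj hc2 hcc => jj X Y; lia.
  move: he; rewrite (modn_small sq) (modn_small hlt) => ->.
  by rewrite divnMDl // divn_small // addn0.
move=> /eqP ->.
have smb : (s %% b < q)%N by apply: leq_ltn_trans (leq_mod _ _) sq.
apply/existsP; exists (Ordinal smb); apply/andP; split => /=.
  case: ifP => hv; first by rewrite ltn_mod.
  have hs := divn_eq s b.
  have hv' : (c.-1 <= s %/ b)%N by lia.
  have hm := leq_mul hv' (leqnn b).
  move: (s %/ b * b)%N (s %% b)%N (c.-1 * b)%N hs hm sq => X Y Z; lia.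
by rewrite -addnA -divn_eq.
Qed.

Lemma Gf_shift (q a b s : nat) : (0 < b)%N -> (b < q)%N -> (s < q)%N ->
  Gf q a b ((a + s) %% q)%N = (s %/ b)%N.
Proof.
move=> b0 bq sq.
have [_ hc2] := @ceil_facts q b b0.
have hv : (s %/ b < ceil_div q b)%N by rewrite ltn_divLR //; lia.
rewrite /Gf; case: pickP => [v Hv | H].
  by move: Hv; rewrite in_block_iff // => /eqP.
by have := H (Ordinal hv); rewrite in_block_iff // eqxx.
Qed.

Lemma mod_pred (c f z w : nat) : (0 < c)%N -> (z < c)%N -> (w < c)%N ->
  (((z + f) %% c) == w)%N = (z == (w + (c - f %% c)) %% c)%N.
Proof.
move=> c0 zc wc.
have hf := ltn_pmod f c0.
have e (y : nat) : (y + f + (c - f %% c) = y + (f %/ c).+1 * c)%N.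
  rewrite {1}(divn_eq f c) mulSn; move: (f %/ c * c)%N (f %% c)%N hf => X Y; lia.
apply/eqP/eqP => [<-|->].
  by rewrite modnDml e addnC modnMDl modn_small.
by rewrite modnDml -addnA [(c - _ + _)%N]addnC addnA e addnC modnMDl modn_small.
Qed.

Section C2.
Variable R : realType.
Local Notation C := R[i].

Lemma oracle_val (n q c : nat) (f : vecZq n q -> nat) (N : R) (psi : state R n q c)
  (x : vecZq n q) (w : 'I_c) : (0 < c)%N -> (forall x z, psi x z = N%:C * omega c z) ->
  apply_oracle f psi x w = N%:C * omega c w * conjc (omega c (f x)).
Proof.
move=> c0 Hpsi; rewrite /apply_oracle.
pose z0 := Ordinal (ltn_pmod (w + (c - f x %% c)) c0).
have hz0 : forall z : 'I_c, (((z + f x) %% c)%N == val w) = (z == z0).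
  by move=> z; rewrite mod_pred ?ltn_ord.
rewrite (big_pred1 z0) // Hpsi.
have := hz0 z0; rewrite eqxx => /eqP hw.
rewrite -hw omega_mod // omegaD -!mulrA.
by rewrite /omega expi_conj1 mulr1.
Qed.

Lemma fiber (n q : nat) (k : vecZq n q) (i0 : 'I_n) (F : nat -> C) :
  (0 < q)%N -> coprime (k i0) q ->
  \sum_(x : vecZq n q) F (ipq x k) = (q ^ n.-1)%:R * \sum_(0 <= t < q) F t.
Proof.
move=> q0 cop.
have [u hu] : exists u, ((k i0 * u) %% q = 1 %% q)%N.
  move: cop; rewrite coprime_sym => /(coprimeP _ q0) [[u1 u2] /= h].
  exists (u2 * q.-1)%N.
  have hA : (u2 * k i0 + 1 = u1 * q)%N by move: (u1 * q)%N (u2 * k i0)%N h => X Y; lia.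
  rewrite -(modnDr (k i0 * (u2 * q.-1)) q).
  have -> : (k i0 * (u2 * q.-1) + q = (u1 * q.-1) * q + 1)%N.
    move: (nat_of_ord (k i0)) hA; case: (q) q0 => // q' _ K /= hA.
    have e : (u1 * q' * q'.+1 = q' * (u2 * K + 1))%N by rewrite hA; ring.
    rewrite e; ring.
  by rewrite modnMDl.
pose sh (s : nat) (x : vecZq n q) : vecZq n q :=
  [ffun i => if i == i0 then Ordinal (ltn_pmod (x i + s * u) q0) else x i].
have ip (s : nat) x : ipq (sh s x) k = ((ipq x k + s) %% q)%N.
  rewrite /ipq modnDml (bigD1 i0) //= [in RHS](bigD1 i0) //= ffunE eqxx /=.
  have -> : (\sum_(i | i != i0) sh s x i * k i = \sum_(i | i != i0) x i * k i)%N.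
    by apply: eq_bigr => i /negbTE hi; rewrite ffunE hi.
  set S := (\sum_(i | i != i0) x i * k i)%N.
  rewrite -modnDml modnMml modnDml.
  have -> : ((x i0 + s * u) * k i0 + S = x i0 * k i0 + S + s * (k i0 * u))%N by ring.
  by rewrite -modnDmr -modnMmr hu modnMmr muln1 modnDmr.
have inj (s : nat) : injective (sh s).
  move=> x y /ffunP E; apply/ffunP => i; have := E i; rewrite !ffunE.
  case: eqP => [->|_] //.
  move=> /(congr1 val) /= /eqP; rewrite eqn_modDr => /eqP.
  by rewrite !modn_small // => /val_inj.
have hs (s : nat) : \sum_(x : vecZq n q) F (ipq x k) =
    \sum_(x : vecZq n q) F ((ipq x k + s) %% q)%N.
  by rewrite (reindex_inj (inj s)); apply: eq_bigr => x _; rewrite ip.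
have n0 : (0 < n)%N by apply: leq_ltn_trans (ltn_ord i0).
have qR : (q%:R : C) != 0 by rewrite pnatr_eq0 -lt0n.
apply: (mulfI qR).
rewrite (_ : (q%:R : C) * _ = \sum_(0 <= s < q) \sum_(x : vecZq n q) F (ipq x k));
  last by rewrite sumr_const_nat subn0 mulr_natl.
under eq_bigr => s _ do rewrite (hs s).
rewrite exchange_big /=.
under eq_bigr => x _ do rewrite (@rot_sum _ q (ipq x k) F q0).
rewrite sumr_const card_ffun !card_ord.
by rewrite mulrA -natrM -expnS prednK // mulr_natl.
Qed.

End C2.

End PartC.
Import PartC.

Module PartE.
Local Open Scope complex_scope.

Section E.
Variable R : realType.
Local Notation nc := (@Normc.normc R).
Local Notation C := R[i].

Lemma natC (m : nat) : (m%:R : C) = (m%:R : R)%:C.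
Proof. by rewrite rmorph_nat. Qed.

Lemma nc_mulrn (x : C) (m : nat) : nc (x *+ m) = nc x * m%:R.
Proof.
by rewrite -[x *+ m]mulr_natr ncM natC ncC ger0_norm // ler0n.
Qed.

Lemma omega0 (m : nat) : @omega R m 0 = 1.
Proof. by rewrite /omega mulr0 mul0r expi0. Qed.

Lemma G_tele (q b : nat) :
  (@omega R q 1 - 1) * \sum_(0 <= j < b) omega q j = omega q b - 1.
Proof.
rewrite mulrBl mul1r mulr_sumr -sumrB.
under eq_bigr do rewrite -omegaD add1n.
by rewrite telescope_sumr // omega0.
Qed.

Lemma alg1 {p q c d X : R} : 0 < p -> 0 < q -> 0 < c ->
  4 / c - 2 * p * d / (q * c) <= 2 * p / q * X -> 2 * q / p - d <= c * X.
Proof.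
move=> p0 q0 c0 h4.
have k0 : 0 < q * c / (2 * p) by rewrite divr_gt0 ?mulr_gt0.
have := ler_pM2r k0; move=> /(_ (4 / c - 2 * p * d / (q * c)) (2 * p / q * X)).
rewrite h4 => /esym h5.
have e3 : (4 / c - 2 * p * d / (q * c)) * (q * c / (2 * p)) = 2 * q / p - d.
  by field; rewrite !gt_eqF.
have e4 : 2 * p / q * X * (q * c / (2 * p)) = c * X.
  by field; rewrite !gt_eqF.
by move: h5; rewrite e3 e4.
Qed.

Lemma G_bound (q b c : nat) : (0 < b)%N -> (b < q)%N -> (2 <= c)%N -> (q <= c * b)%N ->
  2 * q%:R / pi - (c * b - q)%N%:R <= c%:R * nc (\sum_(0 <= j < b) @omega R q j).
Proof.
move=> b0 bq c2 qcb.
set G := \sum_(0 <= j < b) omega q j.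
set d := (c * b - q)%N.
have qR : (0 : R) < q%:R by rewrite ltr0n; lia.
have cR : (0 : R) < c%:R by rewrite ltr0n; lia.
have piR := pi_gt0 R.
have cbE : (c%:R * b%:R : R) = q%:R + d%:R by rewrite -natrM -natrD /d subnKC.
have dE : (d%:R : R) = c%:R * b%:R - q%:R by rewrite cbE; ring.
have up : nc (omega q 1 - 1) <= 2 * pi / q%:R.
  have := @chord_up R (2 * pi * 1%:R / q%:R) 0.
  rewrite expi0 subr0 ger0_norm; last by rewrite mulr1 divr_ge0 ?mulr_ge0 ?ler0n ?pi_ge0.
  by rewrite /omega mulr1n mulr1.
have low : 4 / c%:R - 2 * pi * d%:R / (q%:R * c%:R) <= nc (omega q b - 1).
  have h1 := @chord_low R c c2.
  have h2 := @nc_lb R (expi (2 * pi / c%:R) - 1) (omega q b - 1).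
  have e : expi (2 * pi / c%:R : R) - 1 - (omega q b - 1) = expi (2 * pi / c%:R : R) - omega q b.
    by ring.
  rewrite e in h2.
  have h3 := @chord_up R (2 * pi / c%:R) (2 * pi * b%:R / q%:R).
  have e2 : 2 * pi / c%:R - 2 * pi * b%:R / q%:R = - (2 * pi * d%:R / (q%:R * c%:R)) :> R.
    rewrite dE; field.
    by rewrite !gt_eqF.
  rewrite e2 normrN ger0_norm in h3; last first.
    by rewrite divr_ge0 ?mulr_ge0 ?ler0n ?pi_ge0 // ltW.
  lra.
move: low; rewrite -G_tele ncM => low.
have hG : 0 <= nc G by apply: nc_ge0.
have h4 : 4 / c%:R - 2 * pi * d%:R / (q%:R * c%:R) <= 2 * pi / q%:R * nc G.
  by apply: (le_trans low); rewrite ler_wpM2r.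
exact: (alg1 piR qR cR h4).
Qed.

Lemma nc_omega (m t : nat) : nc (@omega R m t) = 1.
Proof. exact: nc_expi. Qed.

Lemma T_bound (q b c : nat) : (0 < b)%N -> (b < q)%N -> (2 <= c)%N -> (q <= c * b)%N ->
  2 * q%:R / pi - (2 + 2 * pi) * (c * b - q)%N%:R <=
  nc (\sum_(0 <= s < q) @omega R q s * conjc (omega c (s %/ b)%N)).
Proof.
move=> b0 bq c2 qcb.
have hG := @G_bound q b c b0 bq c2 qcb.
set G := \sum_(0 <= j < b) omega q j in hG *.
set d := (c * b - q)%N in hG *.
have qR : (0 : R) < q%:R by rewrite ltr0n; lia.
have cR : (0 : R) < c%:R by rewrite ltr0n; lia.
have piR := pi_gt0 R.
have cbE : (c%:R * b%:R : R) = q%:R + d%:R by rewrite -natrM -natrD /d subnKC.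
have dE : (d%:R : R) = c%:R * b%:R - q%:R by rewrite cbE; ring.
pose phi (v : nat) : R := 2 * pi * (v * b)%N%:R / q%:R - 2 * pi * v%:R / c%:R.
have term s : omega q s * conjc (omega c (s %/ b)%N) = omega q (s %% b)%N * expi (phi (s %/ b)%N).
  rewrite {1}(divn_eq s b) omegaD [omega q (_ * _)%N * _]mulrC -mulrA; congr (_ * _).
  by rewrite /omega expiN expiD /phi.
under eq_bigr do rewrite term.
set T := \sum_(0 <= s < q) _.
set T0 := \sum_(0 <= s < c * b) @omega R q (s %% b)%N.
have hT0 : T0 = G *+ c by rewrite /T0 block_sum.
have hsplit : T0 = \sum_(0 <= s < q) omega q (s %% b)%N + \sum_(q <= s < c * b) omega q (s %% b)%N.
  by rewrite /T0 (big_cat_nat (leq0n q) qcb).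
have hdiff : T - T0 = \sum_(0 <= s < q) omega q (s %% b)%N * (expi (phi (s %/ b)%N) - 1)
    - \sum_(q <= s < c * b) omega q (s %% b)%N.
  rewrite hsplit opprD addrA; congr (_ - _); rewrite /T -sumrB.
  by apply: eq_bigr => s _; rewrite mulrBr mulr1.
have phib s : (s < q)%N -> 0 <= phi (s %/ b)%N <= 2 * pi * d%:R / q%:R.
  move=> sq; have vc : (s %/ b < c)%N by rewrite ltn_divLR //; lia.
  set v := (s %/ b)%N in vc *.
  have e : phi v = (2 * pi * d%:R / q%:R) * (v%:R / c%:R).
    by rewrite /phi natrM dE; field; rewrite !gt_eqF.
  have h0 : (0:R) <= 2 * pi * d%:R / q%:R by rewrite divr_ge0 ?mulr_ge0 ?ler0n ?pi_ge0 // ltW.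
  rewrite e; apply/andP; split; first by rewrite mulr_ge0 // divr_ge0 ?ler0n // ltW.
  apply: ler_piMr => //; rewrite ler_pdivrMr // mul1r ler_nat; lia.
have hnd : nc (T - T0) <= 2 * pi * d%:R + d%:R.
  rewrite hdiff; apply: le_trans (@ncD R _ _) _; rewrite ncN; apply: lerD.
    apply: le_trans (@nc_sum R _ _ _ _) _.
    apply: (@le_trans _ _ (\sum_(0 <= s < q) (2 * pi * d%:R / q%:R))).
      apply: ler_sum_nat => s /andP[_ hs]; rewrite ncM nc_omega mul1r.
      have := @chord_up R (phi (s %/ b)%N) 0; rewrite expi0 subr0.
      have /andP[p0 p1] := phib s hs; rewrite ger0_norm // => h; exact: le_trans h p1.
    rewrite sumr_const_nat subn0.
    have -> : (2 * pi * d%:R / q%:R) *+ q = 2 * pi * d%:R :> R.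
      by rewrite -mulr_natr; field; rewrite gt_eqF.
    by [].
  apply: le_trans (@nc_sum R _ _ _ _) _.
  under eq_bigr do rewrite nc_omega.
  by rewrite sumr_const_nat.
have := @nc_lb R T0 T; rewrite ncB => h.
have hn0 : nc T0 = nc G * c%:R by rewrite hT0 nc_mulrn.
lra.
Qed.

End E.

End PartE.
Import PartE.

Module PartD.
Local Open Scope complex_scope.

Section D.
Variable R : realType.
Local Notation nc := (@Normc.normc R).
Local Notation C := R[i].

Lemma conjcM (x y : C) : conjc (x * y) = conjc x * conjc y.
Proof.
case: x => a b; case: y => c d /=.
apply/eqP; rewrite eq_complex /=; apply/andP; split; apply/eqP; ring.
Qed.

Lemma conjcD (x y : C) : conjc (x + y) = conjc x + conjc y.
Proof. by case: x => a b; case: y => c d /=; rewrite opprD. Qed.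

Lemma conjc_sum (I : Type) (r : seq I) (P : pred I) (F : I -> C) :
  conjc (\sum_(i <- r | P i) F i) = \sum_(i <- r | P i) conjc (F i).
Proof.
apply: (big_morph (@conjc R)); first exact: conjcD.
by rewrite /= oppr0.
Qed.

Lemma D1 (n q c : nat) (psi : state R n q c) (y : vecZq n q) :
  outcome_prob (reduced_dm psi) y =
  \sum_(z : 'I_c) nc (\sum_(x : vecZq n q) QFTn y x * psi x z) ^+ 2.
Proof.
rewrite /outcome_prob /reduced_dm.
transitivity (complex.Re (\sum_(z : 'I_c) (\sum_(x : vecZq n q) QFTn y x * psi x z) *
     conjc (\sum_(x : vecZq n q) QFTn y x * psi x z))).
  congr complex.Re.
  under eq_bigr => x _ do under eq_bigr => x' _ do rewrite mulr_sumr mulr_suml.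
  under eq_bigr do rewrite exchange_big.
  rewrite exchange_big; apply: eq_bigr => z _.
  rewrite conjc_sum mulr_suml; apply: eq_bigr => x _.
  rewrite mulr_sumr; apply: eq_bigr => x' _.
  rewrite !cconjE conjcM; ring.
under eq_bigr do rewrite mul_conj.
by rewrite -rmorph_sum.
Qed.

Lemma QFT_val (n q : nat) (y x : vecZq n q) : (0 < q)%N ->
  QFTn y x = (((Num.sqrt (q%:R : R))^-1) ^+ n)%:C * omega q (ipq x y).
Proof.
move=> q0; rewrite /QFTn big_split /= prodr_const card_ord rmorphXn.
congr (_ * _); rewrite /ipq omega_mod // /omega expi_sum; congr expi.
by rewrite natr_sum mulr_sumr mulr_suml.
Qed.

Lemma fin_ineq (x y e : R) : 0 <= x -> 0 < y -> 0 <= e -> y - e <= x ->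
  y ^+ 2 - 2 * y * e <= x ^+ 2.
Proof. move=> x0 y0 e0 h; case: (leP e y) => h'; nra. Qed.

Lemma final_real (p Q d X : R) : 0 < p -> 0 < Q -> 0 <= d -> 0 <= X ->
  2 * Q / p - (2 + 2 * p) * d <= X ->
  4 / p ^+ 2 - (4 / p * (2 + 2 * p)) * (d / Q) <= X ^+ 2 / Q ^+ 2.
Proof.
move=> p0 Q0 d0 X0 h.
have h1 : 2 / p - (2 + 2 * p) * d / Q <= X / Q.
  have e : 2 / p - (2 + 2 * p) * d / Q = (2 * Q / p - (2 + 2 * p) * d) / Q.
    by field; rewrite !gt_eqF.
  by rewrite e ler_pM2r // invr_gt0.
have := @fin_ineq (X / Q) (2 / p) ((2 + 2 * p) * d / Q) _ _ _ h1.
have H1 : 0 <= X / Q by rewrite divr_ge0 // ltW.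
have H2 : 0 < 2 / p by rewrite divr_gt0.
have H3 : 0 <= (2 + 2 * p) * d / Q by rewrite divr_ge0 ?mulr_ge0 // ?ltW //; lra.
move=> /(_ H1 H2 H3).
have e1 : (2 / p) ^+ 2 - 2 * (2 / p) * ((2 + 2 * p) * d / Q) =
   4 / p ^+ 2 - (4 / p * (2 + 2 * p)) * (d / Q) by field; rewrite !gt_eqF.
have e2 : (X / Q) ^+ 2 = X ^+ 2 / Q ^+ 2 by rewrite expr_div_n.
by rewrite e1 e2.
Qed.

End D.

End PartD.
Import PartD.


Lemma final_eq (R : realType) (Q c X : R) (m : nat) : 0 < Q -> 0 < c ->
  ((Num.sqrt Q)^-1 ^+ m.+1 * ((Num.sqrt (Q ^+ m.+1))^-1 * (Num.sqrt c)^-1)) ^+ 2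
    * (Q ^+ m * X) ^+ 2 * c = X ^+ 2 / Q ^+ 2.
Proof.
move=> Q0 c0.
rewrite !exprMn -exprAC !exprVn !sqr_sqrtr ?exprn_ge0 ?ltW //.
have Qm : Q ^+ m != 0 by rewrite expf_neq0 // gt_eqF.
rewrite -exprVn exprS !exprVn.
move: Qm; set Y := Q ^+ m => Qm.
field.
by rewrite Qm !gt_eqF.
Qed.

Local Notation nc := (@Normc.normc _).

Theorem theorem9 (R : realType) :
  exists C : R,
  forall (n q b : nat) (a : 'I_q) (k : vecZq n q),
    (1 <= n)%N -> (2 <= q)%N -> (1 <= b)%N -> (b <= q - 1)%N ->
    (exists i : 'I_n, coprime (k i) q) ->
    let c := ceil_div q b in
    let d := (c * b - q)%N in
    4 / pi ^+ 2 - C * (d%:R / q%:R) <= success_prob R k a b.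
Proof.
exists (4 / pi * (2 + 2 * pi)).
move=> n q b a k n1 q2 b0 bq [i0 cop] /=.
set c := ceil_div q b. set d := (c * b - q)%N.
have bq' : (b < q)%N by lia.
have q0 : (0 < q)%N by lia.
have [_ hc2] := @ceil_facts q b b0.
have c2 : (2 <= c)%N.
  case: (leqP 2 c) => // hc.
  have : (c * b <= 1 * b)%N by apply: leq_mul => //; lia.
  rewrite mul1n => h; move: (c * b)%N hc2 h => X; lia.
have c0 : (0 < c)%N by lia.
set T := \sum_(0 <= s < q) @omega R q s * conjc (omega c (s %/ b)%N).
have hT := @T_bound R q b c b0 bq' c2 hc2.
pose K1 : R := (Num.sqrt (q%:R : R))^-1 ^+ n.
pose N : R := (Num.sqrt ((q ^ n)%N%:R : R))^-1 * (Num.sqrt (c%:R : R))^-1.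
pose F := fun t : nat => @omega R q t * conjc (omega c (Gf q a b t)).
pose S1 := \sum_(x : vecZq n q) F (ipq x k).
have K1N0 : 0 <= K1 * N.
  by rewrite /K1 /N !mulr_ge0 ?exprn_ge0 ?invr_ge0 ?sqrtr_ge0.
have Az (z : 'I_c) : \sum_(x : vecZq n q) QFTn k x * apply_oracle (LRF k a b) (@psi0 R n q c) x z
    = (((K1 * N)%:C)%C * omega c z) * S1.
  rewrite /S1 mulr_sumr; apply: eq_bigr => x _.
  rewrite (@QFT_val R n q k x q0).
  rewrite (@oracle_val R n q c (LRF k a b) N (@psi0 R n q c) x z c0 (fun _ _ => erefl)).
  rewrite /F -LRF_Gf /K1 /N !rmorphM; ring.
have hS1 : S1 = (q ^ n.-1)%:R * \sum_(0 <= t < q) F t := @fiber R n q k i0 F q0 cop.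
have hT' : \sum_(0 <= t < q) F t = omega q a * T.
  rewrite -(@rot_sum _ q a F q0) /T mulr_sumr.
  apply: eq_big_nat => s /andP[_ hs].
  by rewrite /F omega_mod // Gf_shift // omegaD mulrA.
have ncS1 : nc S1 = (q ^ n.-1)%:R * nc T.
  by rewrite hS1 hT' !ncM natC ncC ger0_norm ?ler0n // nc_omega mul1r.
have key : success_prob R k a b = nc T ^+ 2 / q%:R ^+ 2.
  rewrite /success_prob /= -/c D1.
  under eq_bigr do rewrite Az !ncM ncC nc_omega mulr1 ger0_norm //.
  rewrite sumr_const card_ord ncS1 -mulr_natr natrX.
  have n0 : (0 < n)%N by [].
  have qR : (0 : R) < q%:R by rewrite ltr0n.
  have cR : (0 : R) < c%:R by rewrite ltr0n.
  have := @final_eq R q%:R c%:R (nc T) n.-1 qR cR.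
  rewrite prednK // => <- //.
  by rewrite /K1 /N mul1r -[_ *+ c]mulr_natr natrX; ring.
rewrite key; apply: final_real.
- exact: pi_gt0.
- by rewrite ltr0n.
- exact: ler0n.
- exact: nc_ge0.
- exact: hT.
Qed.
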